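(* Let $\boldsymbol{M}$ be a weight sequence with $\gamma(\boldsymbol{M})>0$. Then $\mathcal{M}(C_{\{\boldsymbol{M}\}}(0,\infty))\subset\Lambda_{\{\boldsymbol{M}\}}$ if and only if $\boldsymbol{M}$ satisfies $\operatorname{(dc)}$.
   Context: Sequences are of positive reals indexed by $\mathbb{N}_0$; $m_p=M_{p+1}/M_p$. Weight sequence: $M_0=1$, $M_p^2\le M_{p-1}M_{p+1}$ ($p\ge1$), $m_p\to\infty$. $\operatorname{(dc)}$: there are $C_0>0$, $H>1$ with $M_{p+1}\le C_0H^{p+1}M_p$ for all $p$. A sequence $(c_p)$ is almost increasing if $c_p\le ac_q$ for all $q\ge p$, some $a>0$; $\gamma(\boldsymbol{M})=\sup\{\mu>0:(m_p/(p+1)^\mu)_p\text{ almost increasing}\}\in[0,\infty]$. $C_{\{\boldsymbol{M}\}}(0,\infty)$ is the space of continuous $\varphi$ on $(0,\infty)$ with $\sup_p\sup_{x>0}x^p|\varphi(x)|/(h^pM_p)<\infty$ for some $h>0$. $\Lambda_{\{\boldsymbol{M}\}}$ is the space of complex sequences $(c_p)$ with $\sup_p|c_p|/(h^pM_p)<\infty$ for some $h>0$. $\mathcal{M}(\varphi)=(\int_0^\infty x^p\varphi(x)\,dx)_{p\in\mathbb{N}_0}$. *)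

(* Defs.v *)
From HB Require Import structures.
From mathcomp Require Import all_boot all_order all_algebra.
From mathcomp Require Import all_classical all_reals all_analysis.
From mathcomp Require complex.
Set Implicit Arguments. Unset Strict Implicit. Unset Printing Implicit Defensive.
Import Order.TTheory GRing.Theory Num.Theory.
Import numFieldNormedType.Exports.
Local Open Scope classical_set_scope.
Local Open Scope ring_scope.

Definition quot_seq (R : realType) (M : nat -> R) (p : nat) : R := M p.+1 / M p.

Definition weight_sequence (R : realType) (M : nat -> R) : Prop :=
  (forall p, 0 < M p) /\ M 0%N = 1 /\
  (forall p, (1 <= p)%N -> M p ^+ 2 <= M p.-1 * M p.+1) /\
  (quot_seq M @ \oo --> +oo).

Definition dc (R : realType) (M : nat -> R) : Prop :=
  exists C0 H : R, 0 < C0 /\ 1 < H /\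
    forall p, M p.+1 <= C0 * H ^+ p.+1 * M p.

Definition almost_increasing (R : realType) (c : nat -> R) : Prop :=
  exists a : R, 0 < a /\ forall p q : nat, (p <= q)%N -> c p <= a * c q.

(* gamma(M) = sup {mu > 0 : (m_p/(p+1)^mu)_p almost increasing}, in \bar R;
   the sup of the empty set is -oo here (the paper's convention gives 0;
   only the condition 0 < gamma M matters, and it agrees). *)
Definition gamma_index (R : realType) (M : nat -> R) : \bar R :=
  ereal_sup [set (mu%:E)%E | mu in
    [set mu : R | 0 < mu /\
       almost_increasing (fun p => quot_seq M p / (p.+1%:R `^ mu))]].

Definition C_M (R : realType) (M : nat -> R) (phi : R -> complex.complex R) : Prop :=
  {in `]0, +oo[%classic, continuous (fun x => complex.Re (phi x))} /\
  {in `]0, +oo[%classic, continuous (fun x => complex.Im (phi x))} /\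
  exists h : R, 0 < h /\ exists C : R, forall (p : nat) (x : R), 0 < x ->
     x ^+ p * complex.ComplexField.Normc.normc (phi x) / (h ^+ p * M p) <= C.

Definition Lambda_M (R : realType) (M : nat -> R) (c : nat -> complex.complex R) : Prop :=
  exists h : R, 0 < h /\ exists C : R, forall p : nat,
     complex.ComplexField.Normc.normc (c p) / (h ^+ p * M p) <= C.

Definition moments (R : realType) (phi : R -> complex.complex R) (p : nat)
  : complex.complex R :=
  complex.Complex
    (Rintegral lebesgue_measure `]0, +oo[%classic
       (fun x => x ^+ p * complex.Re (phi x)))
    (Rintegral lebesgue_measure `]0, +oo[%classic
       (fun x => x ^+ p * complex.Im (phi x))).

(* Main.v *)
Require Import Defs.
From HB Require Import structures.
From mathcomp Require Import all_boot all_order all_algebra.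
From mathcomp Require Import all_classical all_reals all_analysis.
From mathcomp Require complex.
From mathcomp Require Import measurable_realfun ring lra.
Import Order.TTheory GRing.Theory Num.Theory.
Import numFieldNormedType.Exports.
Local Open Scope classical_set_scope.
Local Open Scope ring_scope.
Section Cplx.
Context {R : realType}.
Local Notation normc := (@complex.ComplexField.Normc.normc R).

Lemma normcE (a b : R) : normc (complex.Complex a b) = Num.sqrt (a ^+ 2 + b ^+ 2).
Proof. by []. Qed.

Lemma normc_ReIm (a b : R) : `|a| <= normc (complex.Complex a b) /\ `|b| <= normc (complex.Complex a b).
Proof.
rewrite normcE -!sqrtr_sqr; split; apply: ler_wsqrtr.
  by rewrite lerDl sqr_ge0.
by rewrite lerDr sqr_ge0.
Qed.
Lemma normc_leD (a b : R) : normc (complex.Complex a b) <= `|a| + `|b|.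
Proof.
rewrite normcE -[X in _ <= X]ger0_norm ?addr_ge0// -sqrtr_sqr; apply: ler_wsqrtr.
rewrite sqrrD -[a ^+ 2]real_normK ?num_real // -[b ^+ 2]real_normK ?num_real //.
rewrite -[in leRHS]addrA lerD2l ler_wpDl // mulrn_wge0 // mulr_ge0.
Qed.

Lemma normc_real (a : R) : normc (complex.Complex a 0) = `|a|.
Proof. by rewrite normcE expr0n addr0 sqrtr_sqr. Qed.
End Cplx.

Section Weight.
Context {R : realType} (M : nat -> R).
Hypothesis Mpos : forall p, 0 < M p.
Hypothesis Mlc : forall p, (1 <= p)%N -> M p ^+ 2 <= M p.-1 * M p.+1.
Local Notation m := (quot_seq M).

Lemma m_gt0 p : 0 < m p.
Proof. by rewrite /quot_seq divr_gt0. Qed.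

Lemma m_step p : m p <= m p.+1.
Proof.
rewrite /quot_seq ler_pdivrMr // mulrC mulrA ler_pdivlMr //.
by rewrite -expr2 (Mlc _ (ltn0Sn p)).
Qed.

Lemma m_mono p q : (p <= q)%N -> m p <= m q.
Proof.
move=> /subnK <-; elim: (q - p)%N => [|k IH]; first by rewrite add0n.
by apply: le_trans IH _; rewrite addSn m_step.
Qed.

Definition fq (q : nat) (x : R) := M q / x ^+ q.

Lemma fq_S q x : 0 < x -> fq q.+1 x = fq q x * (m q / x).
Proof.
move=> x0; rewrite /fq /quot_seq exprS.
have Mq : M q != 0 by rewrite gt_eqF.
have xq : x ^+ q != 0 by rewrite gt_eqF ?exprn_gt0.
have xn : x != 0 by rewrite gt_eqF.
by field; rewrite xn Mq xq.
Qed.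

Lemma fq_gt0 q x : 0 < x -> 0 < fq q x.
Proof. by move=> x0; rewrite /fq divr_gt0 ?exprn_gt0. Qed.

Lemma fq_up p x : 0 < x -> x <= m p -> forall k, fq p x <= fq (p + k) x.
Proof.
move=> x0 xm; elim=> [|k IH]; first by rewrite addn0.
rewrite addnS fq_S //; apply: (le_trans IH).
have f0 := ltW (@fq_gt0 (p + k) x x0).
rewrite ler_peMr // ler_pdivlMr // mul1r.
by apply: le_trans xm _; apply: m_mono; rewrite leq_addr.
Qed.

Lemma fq_down p x : 0 < x -> (1 <= p)%N -> m p.-1 <= x ->
  forall q, (q <= p)%N -> fq p x <= fq q x.
Proof.
move=> x0 p1 mx q qp.
have -> : p = (q + (p - q))%N by rewrite subnKC.
have : (q + (p - q) <= p)%N by rewrite subnKC.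
elim: (p - q)%N => [|k IH] hk; first by rewrite addn0.
have hk' : (q + k <= p)%N by apply: leq_trans hk; rewrite addnS.
rewrite addnS fq_S //; apply: le_trans _ (IH hk').
have f0 := ltW (@fq_gt0 (q + k) x x0).
rewrite ler_piMr // ler_pdivrMr // mul1r.
apply: le_trans mx; apply: m_mono.
by rewrite -ltnS prednK // (leq_trans _ hk) // addnS.
Qed.


Lemma fq_cont q x : 0 < x -> {for x, continuous (fq q)}.
Proof.
move=> x0.
have -> : fq q = (fun=> M q) \* (fun y => (y ^+ q)^-1) by [].
apply: continuousM; first exact: cst_continuous.
apply: continuousV; first by rewrite gt_eqF ?exprn_gt0.
exact: exprn_continuous.
Qed.

Definition phi0 (x : R) : R := inf (range (fun q => fq q x)).

Lemma phi0_le x q : 0 < x -> phi0 x <= fq q x.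
Proof.
move=> x0; apply: ge_inf; last by exists q.
exists 0 => _ [k _ <-]; exact: ltW (@fq_gt0 k x x0).
Qed.

Lemma phi0_ge x y : (forall q, y <= fq q x) -> y <= phi0 x.
Proof.
move=> hy; apply: lb_le_inf; first by exists (fq 0 x), 0%N.
by move=> _ [k _ <-].
Qed.

Lemma phi0_ge0 x : 0 < x -> 0 <= phi0 x.
Proof. by move=> x0; apply: phi0_ge => q; exact: ltW (@fq_gt0 q x x0). Qed.

Lemma phi0_eqp p x : 0 < x -> (1 <= p)%N -> m p.-1 <= x -> x <= m p ->
  fq p x <= phi0 x.
Proof.
move=> x0 p1 h1 h2; apply: phi0_ge => q.
have [qp|pq] := leqP q p; first exact: fq_down.
have -> : q = (p + (q - p))%N by rewrite subnKC // ltnW.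
exact: fq_up.
Qed.

Fixpoint gmin (P : nat) (x : R) : R :=
  if P is P'.+1 then Num.min (gmin P' x) (fq P x) else fq 0 x.

Lemma gmin_le P x q : (q <= P)%N -> gmin P x <= fq q x.
Proof.
elim: P => [|P IH] /=; first by rewrite leqn0 => /eqP ->.
rewrite leq_eqVlt => /orP[/eqP ->|]; first by rewrite ge_min lexx orbT.
by rewrite ltnS => /IH h; rewrite ge_min h.
Qed.

Lemma gmin_mem P x : exists2 q, (q <= P)%N & gmin P x = fq q x.
Proof.
elim: P => [|P [q qP eq]] /=; first by exists 0%N.
rewrite eq /Num.min; case: ifP => _.
  by exists q => //; rewrite (leq_trans qP).
by exists P.+1.
Qed.

Lemma phi0_gmin P x : 0 < x -> x <= m P -> phi0 x = gmin P x.
Proof.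
move=> x0 xm; apply/eqP; rewrite eq_le; apply/andP; split.
  by have [q _ ->] := gmin_mem P x; exact: phi0_le.
apply: phi0_ge => q.
have [qP|Pq] := leqP q P; first exact: gmin_le.
have -> : q = (P + (q - P))%N by rewrite subnKC // ltnW.
by apply: le_trans (@gmin_le P x P (leqnn P)) _; exact: fq_up.
Qed.

Lemma gmin_cont P x : 0 < x -> {for x, continuous (gmin P)}.
Proof.
move=> x0; elim: P => [|P IH] /=; first exact: fq_cont.
have := @continuous_min R R (gmin P) (fq P.+1) x IH (@fq_cont P.+1 x x0).
by [].
Qed.

End Weight.

Section Phi0Cont.
Context {R : realType} (M : nat -> R).
Hypothesis Mpos : forall p, 0 < M p.
Hypothesis Mlc : forall p, (1 <= p)%N -> M p ^+ 2 <= M p.-1 * M p.+1.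
Hypothesis minf : quot_seq M @ \oo --> +oo.

Lemma phi0_cont x : 0 < x -> {for x, continuous (phi0 M)}.
Proof.
move=> x0.
have [P xP] : exists P, x < quot_seq M P.
  have := (cvgryPgt _).1 minf x; case=> N _ HN.
  by exists N; apply: HN => /=.
have ev : \forall y \near x, gmin M P y = phi0 M y.
  near=> y; apply/esym/phi0_gmin => //; [near: y; exact: lt_nbhsr|].
  by apply/ltW; near: y; exact: lt_nbhsl.
apply: cvg_trans (near_eq_cvg ev) _.
rewrite (@phi0_gmin _ M Mpos Mlc P x x0 (ltW xP)).
exact: gmin_cont.
Unshelve. all: by end_near.
Qed.
End Phi0Cont.

Section IntBound.
Context {R : realType}.
Local Notation mu := (@lebesgue_measure R).

Lemma int_oneDsqrV : mu.-integrable `[0, +oo[ (EFin \o (fun x : R => (oneDsqr x)^-1)).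
Proof.
apply/integrableP; split.
  apply/measurable_EFinP; apply: measurable_funS (continuous_measurable_fun _) => //.
  exact: continuous_oneDsqrV.
under eq_integral do rewrite /= ger0_norm ?invr_ge0 ?(le_trans _ (oneDsqr_ge1 _))//.
by rewrite integral0y_oneDsqr ltry.
Qed.

Lemma int_bound (psi : R -> R) (A B : R) :
  {in `]0, +oo[%classic, continuous psi} ->
  (forall x, 0 < x -> `|psi x| <= A) ->
  (forall x, 0 < x -> x ^+ 2 * `|psi x| <= B) ->
  mu.-integrable `]0, +oo[ (EFin \o psi) /\
  `|Rintegral mu `]0, +oo[ psi| <= (A + B) * (pi / 2).
Proof.
move=> cpsi hA hB.
have mpsi : measurable_fun (`]0, +oo[ : set R) psi.
  by apply: open_continuous_measurable_fun => //.
have dom x : 0 < x -> `|psi x| <= (A + B) * (oneDsqr x)^-1.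
  move=> x0; rewrite ler_pdivlMr; last by rewrite (lt_le_trans _ (oneDsqr_ge1 _)).
  by rewrite /oneDsqr mulrDr mulr1 mulrC lerD ?hA ?hB.
have AB0 : 0 <= A + B.
  by apply: addr_ge0; [apply: le_trans (hA _ ltr01)|
    apply: le_trans (hB _ ltr01); rewrite expr1n mul1r].
have ig : mu.-integrable `]0, +oo[ (EFin \o (fun x : R => (A + B) * (oneDsqr x)^-1)).
  apply: (@integrableS _ _ _ mu `[0, +oo[) => //.
    by apply: subset_itvr; rewrite bnd_simp.
  pose g := fun x : R => (oneDsqr x)^-1.
  have -> : (EFin \o (fun x : R => (A + B) * (oneDsqr x)^-1)) =
     (fun x => ((A + B)%:E * (EFin \o g) x)%E).
    by apply/funext => x /=; rewrite EFinM.
  apply: integrableZl => //; exact: int_oneDsqrV.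
have ipsi : mu.-integrable `]0, +oo[ (EFin \o psi).
  apply: le_integrable ig => //; first exact/measurable_EFinP.
  move=> x; rewrite /= in_itv/= andbT => x0.
  rewrite /= !lee_fin (le_trans (dom _ x0))// ler_norm//.
split => //.
pose g := fun x : R => (oneDsqr x)^-1.
have g0 x : 0 <= g x by rewrite /g invr_ge0 (le_trans _ (oneDsqr_ge1 _)).
have mg : measurable_fun setT g.
  by apply: continuous_measurable_fun; exact: continuous_oneDsqrV.
have h1 : (\int[mu]_(x in (`]0%R, +oo[ : set R)) (`|psi x|)%:E <= ((A + B) * (pi / 2))%:E)%E.
  apply: (@le_trans _ _ (\int[mu]_(x in (`]0%R, +oo[ : set R)) ((A + B)%:E * (g x)%:E))%E).
    apply: ge0_le_integral => //.
    - by apply/measurable_EFinP; apply: measurableT_comp.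
    - apply: emeasurable_funM => //; apply/measurable_EFinP.
      exact: measurable_funS mg.
    - by move=> x; rewrite /= in_itv/= andbT => x0; rewrite -EFinM lee_fin dom.
  apply: (@le_trans _ _ (\int[mu]_(x in (`[0%R, +oo[ : set R)) ((A + B)%:E * (g x)%:E))%E).
    apply: ge0_subset_integral => //.
    - apply: emeasurable_funM => //; apply/measurable_EFinP.
      exact: measurable_funS mg.
    - by move=> x _; rewrite -EFinM lee_fin mulr_ge0.
    - by apply: subset_itvr; rewrite bnd_simp.
  rewrite ge0_integralZl_EFin //.
  - by rewrite /g integral0y_oneDsqr -EFinM.
  - by move=> x _; rewrite lee_fin.
  - by apply/measurable_EFinP; exact: measurable_funS mg.
apply: le_trans (le_normr_Rintegral _ _) _ => //.
rewrite /Rintegral -lee_fin fineK //.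
rewrite ge0_fin_numE; first exact: (le_lt_trans h1 (ltry _)).
by apply: integral_ge0 => x _; rewrite lee_fin.
Qed.
End IntBound.

Section Lower.
Context {R : realType} (M : nat -> R).
Hypothesis Mpos : forall p, 0 < M p.
Hypothesis Mlc : forall p, (1 <= p)%N -> M p ^+ 2 <= M p.-1 * M p.+1.
Hypothesis minf : quot_seq M @ \oo --> +oo.
Local Notation mu := (@lebesgue_measure R).
Local Notation m := (quot_seq M).

Lemma xfq p x : 0 < x -> x ^+ p * fq M p x = M p.
Proof. by move=> x0; rewrite /fq mulrCA mulfV ?mulr1 // expf_neq0 // gt_eqF. Qed.

Lemma psi_cont p : {in `]0, +oo[%classic, continuous (fun x : R => x ^+ p * phi0 M x)}.
Proof.
move=> x; rewrite inE /= in_itv /= andbT => x0.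
have -> : (fun x : R => x ^+ p * phi0 M x) = (fun y : R => y ^+ p) \* phi0 M by [].
apply: continuousM; first exact: exprn_continuous.
exact: phi0_cont.
Qed.

Lemma psi_int p : mu.-integrable `]0, +oo[ (EFin \o (fun x => x ^+ p * phi0 M x)).
Proof.
have [] := @int_bound R (fun x => x ^+ p * phi0 M x) (M p) (M p.+2) (psi_cont p).
- move=> x x0.
  have f0 := @phi0_ge0 R M Mpos x x0.
  have xp : 0 <= x ^+ p by rewrite exprn_ge0 // ltW.
  rewrite ger0_norm ?mulr_ge0 //.
  rewrite -(@xfq p x x0); apply: ler_wpM2l => //; exact: phi0_le.
- move=> x x0.
  have f0 := @phi0_ge0 R M Mpos x x0.
  have xp : 0 <= x ^+ p.+2 by rewrite exprn_ge0 // ltW.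
  have xp' : 0 <= x ^+ p by rewrite exprn_ge0 // ltW.
  rewrite ger0_norm ?mulr_ge0 //.
  rewrite mulrA -exprD addnC addn2 -(@xfq p.+2 x x0); apply: ler_wpM2l => //; exact: phi0_le.
by [].
Qed.

Lemma lower p : (1 <= p)%N ->
  M p * (m p - m p.-1) <= Rintegral mu `]0, +oo[ (fun x => x ^+ p * phi0 M x).
Proof.
move=> p1.
set a := m p.-1; set b := m p.
have a0 : 0 < a by exact: m_gt0.
have ab : a <= b by rewrite /a /b m_mono // leq_pred.
have mpsi : measurable_fun (`]0, +oo[%classic : set R) (fun x => x ^+ p * phi0 M x).
  by apply: open_continuous_measurable_fun; [exact: rray_open| exact: psi_cont].
have sub : `[a, b]%classic `<=` (`]0, +oo[%classic : set R).
  move=> x; rewrite /= !in_itv /= andbT => /andP[ax _]; exact: lt_le_trans ax.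
have psi0 : forall x, (`]0, +oo[%classic : set R) x -> 0 <= x ^+ p * phi0 M x.
  move=> x; rewrite /= in_itv /= andbT => x0.
  have f0 := @phi0_ge0 R M Mpos x x0.
  by rewrite mulr_ge0 // exprn_ge0 // ltW.
rewrite /Rintegral -lee_fin fineK; last exact: integrable_fin_num (psi_int p).
apply: (@le_trans _ _ (\int[mu]_(x in (`[a, b]%classic : set R)) (x ^+ p * phi0 M x)%:E)%E); last first.
  apply: ge0_subset_integral => //.
  exact/measurable_EFinP.
apply: (@le_trans _ _ (\int[mu]_(x in (`[a, b]%classic : set R)) (M p)%:E)%E).
  rewrite integral_cst //.
  have := lebesgue_measure_itv `[a, b]; rewrite /= => ->.
  rewrite lte_fin; have [lt_ab|ba] := ltP a b; first by rewrite -EFinD -EFinM.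
  have -> : b = a by apply/eqP; rewrite eq_le ab ba.
  by rewrite subrr mulr0 mule0.
apply: ge0_le_integral => //.
- by move=> x _; rewrite lee_fin ltW.
- apply/measurable_EFinP; exact: measurable_funS mpsi.
- move=> x; rewrite /= in_itv /= => /andP[ax xb].
  have x0 : 0 < x by exact: lt_le_trans ax.
  rewrite lee_fin -(@xfq p x x0); apply: ler_wpM2l; first by rewrite exprn_ge0 // ltW.
  exact: phi0_eqp.
Qed.
End Lower.

Lemma dc_of {R : realType} (M : nat -> R) (h C : R) : (forall p, 0 < M p) -> 0 < h ->
  (forall p, (1 <= p)%N -> quot_seq M p - quot_seq M p.-1 <= C * h ^+ p) -> dc M.
Proof.
move=> Mpos h0 hyp.
set m := quot_seq M.
have m0 : 0 < m 0%N := @m_gt0 R M Mpos 0.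
pose K := m 0%N + `|C|; pose H := 1 + h.
have K0 : 0 < K by rewrite /K; apply: (lt_le_trans m0); rewrite lerDl.
have H1 : 1 < H by rewrite /H ltrDl.
have H0 : 0 <= H by rewrite /H addr_ge0 // ltW.
have mb : forall p, m p <= K * H ^+ p.
  elim=> [|p IH]; first by rewrite expr0 mulr1 /K lerDl.
  have s1 := hyp p.+1 isT; rewrite /= in s1.
  have hp : 0 <= h ^+ p by rewrite exprn_ge0 // ltW.
  have hH : h ^+ p <= H ^+ p.
    apply: lerXn2r.
    - by rewrite nnegrE ltW.
    - by rewrite nnegrE.
    - by rewrite /H lerDr ler01.
  have Hp : 0 <= H ^+ p by rewrite exprn_ge0.
  have e1a : C * h ^+ p.+1 <= `|C| * h ^+ p.+1.
    by apply: ler_wpM2r; [exact: exprn_ge0 (ltW h0) | exact: ler_norm].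
  have e1b : `|C| * h ^+ p.+1 <= `|C| * h * H ^+ p.
    rewrite exprS mulrA; apply: ler_wpM2l hH; exact: mulr_ge0 (normr_ge0 C) (ltW h0).
  have e1 := le_trans e1a e1b.
  have e2 : `|C| * h * H ^+ p <= (K - m 0%N) * h * H ^+ p.
    by rewrite /K addrAC subrr add0r.
  have e3 : 0 <= m 0%N * h * H ^+ p by rewrite mulr_ge0 // mulr_ge0 // ltW.
  rewrite -/m in s1; rewrite exprS /H; rewrite /H in e2 e1 e3 IH; clearbody m K.
  nra.
exists K, H; split => //; split => // p.
rewrite (_ : M p.+1 = m p * M p); last by rewrite /m /quot_seq divfK // gt_eqF.
apply: ler_wpM2r; first exact: ltW.
apply: le_trans (mb p) _; apply: ler_wpM2l; first exact: ltW.
by rewrite exprS ler_peMl // ?exprn_ge0 // ltW // (lt_trans ltr01).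
Qed.

Lemma incl_dc {R : realType} (M : nat -> R) : weight_sequence M ->
  (forall phi : R -> complex.complex R, C_M M phi -> Lambda_M M (moments phi)) -> dc M.
Proof.
case=> Mpos [M0 [Mlc minf]] incl.
pose phi := fun x : R => complex.Complex (phi0 M x) 0.
have CM : C_M M phi.
  split; [|split].
  - move=> x; rewrite inE /= in_itv /= andbT => x0.
    have := @phi0_cont R M Mpos Mlc minf x x0; exact.
  - by move=> x _; exact: cst_continuous.
  - exists 1; split => //; exists 1 => p x x0.
    have f0 := @phi0_ge0 R M Mpos x x0.
    rewrite normc_real expr1n mul1r ger0_norm // ler_pdivrMr // mul1r.
    rewrite -(@xfq R M p x x0); apply: ler_wpM2l; first by rewrite exprn_ge0 // ltW.
    exact: phi0_le.
have [h [h0 [C HC]]] := incl phi CM.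
apply: (@dc_of R M h C Mpos h0) => p p1.
have L := @lower R M Mpos Mlc minf p p1.
have := HC p; rewrite /moments ler_pdivrMr ?mulr_gt0 ?exprn_gt0 //.
set I := Rintegral _ _ _; set J := Rintegral _ _ _.
have [N _] := normc_ReIm I J.
move=> HN.
have : M p * (quot_seq M p - quot_seq M p.-1) <= C * h ^+ p * M p.
  rewrite -mulrA; apply: le_trans L _; apply: le_trans (ler_norm _) _.
  exact: le_trans N HN.
by rewrite mulrC ler_pM2r.
Qed.

Lemma dc_incl {R : realType} (M : nat -> R) : weight_sequence M -> dc M ->
  (forall phi : R -> complex.complex R, C_M M phi -> Lambda_M M (moments phi)).
Proof.
case=> Mpos [M0 [Mlc minf]] [C0 [H [C00 [H1 dcH]]]] phi [cRe [cIm [h [h0 [C HC]]]]].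
have H0 : 0 < H by exact: lt_trans ltr01 H1.
have hp q : 0 < h ^+ q by rewrite exprn_gt0.
have Hp q : 0 < H ^+ q by rewrite exprn_gt0.
have bnd q x : 0 < x -> x ^+ q * complex.ComplexField.Normc.normc (phi x) <= C * h ^+ q * M q.
  move=> x0; have := HC q x x0; rewrite ler_pdivrMr ?mulr_gt0 //.
  by rewrite mulrA.
have C0' : 0 <= C.
  have := bnd 0%N 1 ltr01; rewrite !expr0 mul1r mulr1 M0 mulr1.
  move=> hb; apply: le_trans hb.
  by case: (phi 1) => a b; exact: le_trans (normr_ge0 a) (normc_ReIm a b).1.
have key (f : R -> R) q : {in `]0, +oo[%classic, continuous f} ->
    (forall x, 0 < x -> `|f x| <= complex.ComplexField.Normc.normc (phi x)) ->
    `|Rintegral lebesgue_measure `]0, +oo[ (fun x => x ^+ q * f x)|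
      <= (C * h ^+ q * M q + C * h ^+ q.+2 * M q.+2) * (pi / 2).
  move=> cf hf.
  have [] := @int_bound R (fun x => x ^+ q * f x) (C * h ^+ q * M q) (C * h ^+ q.+2 * M q.+2).
  - move=> x; rewrite inE /= in_itv /= andbT => x0.
    have -> : (fun x => x ^+ q * f x) = (fun y : R => y ^+ q) \* f by [].
    apply: continuousM; first exact: exprn_continuous.
    by apply: cf; rewrite inE /= in_itv /= andbT.
  - move=> x x0; have xq : 0 <= x ^+ q by rewrite exprn_ge0 // ltW.
    rewrite normrM (ger0_norm xq).
    apply: le_trans (bnd q x x0); apply: ler_wpM2l => //.
    exact: hf.
  - move=> x x0; have xq : 0 <= x ^+ q by rewrite exprn_ge0 // ltW.
    have xq2 : 0 <= x ^+ q.+2 by rewrite exprn_ge0 // ltW.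
    rewrite normrM (ger0_norm xq) mulrA -exprD addnC addn2.
    apply: le_trans (bnd q.+2 x x0); apply: ler_wpM2l => //.
    exact: hf.
  by [].
exists (h * H ^+ 2); split; first by rewrite mulr_gt0 // exprn_gt0.
exists (pi * C * (1 + h ^+ 2 * C0 ^+ 2 * H ^+ 3)) => p.
rewrite ler_pdivrMr ?mulr_gt0 ?exprn_gt0 ?mulr_gt0 ?exprn_gt0 //.
have nRe x : 0 < x -> `|complex.Re (phi x)| <= complex.ComplexField.Normc.normc (phi x).
  by move=> _; case: (phi x) => a b; exact: (normc_ReIm a b).1.
have nIm x : 0 < x -> `|complex.Im (phi x)| <= complex.ComplexField.Normc.normc (phi x).
  by move=> _; case: (phi x) => a b; exact: (normc_ReIm a b).2.
have kRe := key (fun x => complex.Re (phi x)) p cRe nRe.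
have kIm := key (fun x => complex.Im (phi x)) p cIm nIm.
apply: le_trans (normc_leD _ _) _.
apply: le_trans (lerD kRe kIm) _.
rewrite -mulrDr -splitr.
set u := h ^+ p; set w := H ^+ p.
have w1 : 1 <= w by rewrite /w exprn_ege1 // ltW.
have u0 : 0 < u by exact: hp.
have Mp0 := Mpos p.
have hM2 : M p.+2 <= C0 ^+ 2 * H ^+ 3 * w ^+ 2 * M p.
  apply: le_trans (dcH p.+1) _.
  apply: le_trans (ler_wpM2l _ (dcH p)) _.
    by rewrite mulr_ge0 // ?ltW // exprn_gt0.
  rewrite !exprS /w le_eqVlt; apply/orP; left; apply/eqP; ring.
rewrite exprMn exprAC -/w !exprS -/u.
have t1 : 0 <= pi * C * u * M p * (w ^+ 2 - 1).
  have w2 : 1 <= w ^+ 2 by rewrite exprn_ege1.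
  apply: mulr_ge0; last by rewrite subr_ge0.
  by rewrite !mulr_ge0 // ?pi_ge0 // ltW.
have t2 : 0 <= pi * C * h ^+ 2 * u * (C0 ^+ 2 * H ^+ 3 * w ^+ 2 * M p - M p.+2).
  apply: mulr_ge0; last by rewrite subr_ge0.
  by rewrite !mulr_ge0 // ?pi_ge0 // ?exprn_ge0 // ltW.
rewrite !expr2 in t1 t2 *.
lra.
Qed.

Theorem proposition3p3 (R : realType) (M : nat -> R) :
  weight_sequence M -> (0 < gamma_index M)%E ->
  ((forall phi : R -> complex.complex R, C_M M phi -> Lambda_M M (moments phi))
   <-> dc M).
Proof.
move=> wM _; split; first exact: incl_dc.
exact: dc_incl.
Qed.
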